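(* Let $\varphi$ be a quantifier-free first-order formula in the language $\sigma^{bdbo}_=$. Then $\varphi$ is satisfiable in some bdbo if and only if $\varphi$ is satisfiable in some brdg (regarding $\varphi$ as a $\sigma^{brdg}_=$-formula).
   Context: A bdbo is an algebra $\langle A,\wedge,\vee,\circ,0,1,\leqslant\rangle$ where $\langle A,\wedge,\vee,0,1\rangle$ is a bounded distributive lattice with natural order $\leqslant$ and $\circ$ is a binary operation with $x\circ0=0=0\circ x$, $x\circ(y\vee z)=(x\circ y)\vee(x\circ z)$, $(y\vee z)\circ x=(y\circ x)\vee(z\circ x)$; $\sigma^{bdbo}_=$ is its language (symbols $\wedge,\vee,\circ,0,1,\leqslant$) with equality. A brdg is an algebra $\langle A,\wedge,\vee,\circ,\backslash,/,0,1,\leqslant\rangle$ where $\langle A,\wedge,\vee,0,1\rangle$ is a bounded distributive lattice with natural order $\leqslant$ and $\circ,\backslash,/$ are binary operations such that $x\circ y\leqslant z\iff y\leqslant x\backslash z\iff x\leqslant z/y$; $\sigma^{brdg}_=$ is its language with equality. A quantifier-free first-order formula is a Boolean combination of atomic formulas $s=t$, $s\leqslant t$; it is satisfiable in an algebra if it is true there under some valuation of its variables. *)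

(* Defs.v *)
Record bdl_axioms (A : Type) (meet join : A -> A -> A) (zero one : A) : Prop := {
  meetA : forall x y z, meet x (meet y z) = meet (meet x y) z;
  joinA : forall x y z, join x (join y z) = join (join x y) z;
  meetC : forall x y, meet x y = meet y x;
  joinC : forall x y, join x y = join y x;
  meet_absorb : forall x y, meet x (join x y) = x;
  join_absorb : forall x y, join x (meet x y) = x;
  meet_distr : forall x y z, meet x (join y z) = join (meet x y) (meet x z);
  join0x : forall x, join zero x = x;
  meet1x : forall x, meet one x = x
}.

Definition nat_le {A : Type} (meet : A -> A -> A) (x y : A) : Prop := meet x y = x.

Record bdbo : Type := {
  bdbo_car :> Type;
  bdbo_meet : bdbo_car -> bdbo_car -> bdbo_car;
  bdbo_join : bdbo_car -> bdbo_car -> bdbo_car;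
  bdbo_comp : bdbo_car -> bdbo_car -> bdbo_car;
  bdbo_zero : bdbo_car;
  bdbo_one : bdbo_car;
  bdbo_lat : bdl_axioms bdbo_car bdbo_meet bdbo_join bdbo_zero bdbo_one;
  bdbo_comp0r : forall x, bdbo_comp x bdbo_zero = bdbo_zero;
  bdbo_comp0l : forall x, bdbo_comp bdbo_zero x = bdbo_zero;
  bdbo_compDr : forall x y z,
      bdbo_comp x (bdbo_join y z) = bdbo_join (bdbo_comp x y) (bdbo_comp x z);
  bdbo_compDl : forall x y z,
      bdbo_comp (bdbo_join y z) x = bdbo_join (bdbo_comp y x) (bdbo_comp z x)
}.

Record brdg : Type := {
  brdg_car :> Type;
  brdg_meet : brdg_car -> brdg_car -> brdg_car;
  brdg_join : brdg_car -> brdg_car -> brdg_car;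
  brdg_comp : brdg_car -> brdg_car -> brdg_car;
  brdg_ldiv : brdg_car -> brdg_car -> brdg_car;
  brdg_rdiv : brdg_car -> brdg_car -> brdg_car;
  brdg_zero : brdg_car;
  brdg_one : brdg_car;
  brdg_lat : bdl_axioms brdg_car brdg_meet brdg_join brdg_zero brdg_one;
  brdg_res1 : forall x y z,
      nat_le brdg_meet (brdg_comp x y) z <-> nat_le brdg_meet y (brdg_ldiv x z);
  brdg_res2 : forall x y z,
      nat_le brdg_meet y (brdg_ldiv x z) <-> nat_le brdg_meet x (brdg_rdiv z y)
}.

Inductive term : Type :=
  | tVar : nat -> term
  | tMeet : term -> term -> term
  | tJoin : term -> term -> term
  | tComp : term -> term -> term
  | tZero : term
  | tOne : term.

Inductive qf_formula : Type :=
  | fEq : term -> term -> qf_formula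
  | fLe : term -> term -> qf_formula
  | fTrue : qf_formula
  | fFalse : qf_formula
  | fNot : qf_formula -> qf_formula
  | fAnd : qf_formula -> qf_formula -> qf_formula
  | fOr : qf_formula -> qf_formula -> qf_formula
  | fImp : qf_formula -> qf_formula -> qf_formula.

Fixpoint eval_term {A : Type} (meet join comp : A -> A -> A) (zero one : A)
    (v : nat -> A) (t : term) : A :=
  match t with
  | tVar n => v n
  | tMeet s u => meet (eval_term meet join comp zero one v s)
                      (eval_term meet join comp zero one v u)
  | tJoin s u => join (eval_term meet join comp zero one v s)
                      (eval_term meet join comp zero one v u)
  | tComp s u => comp (eval_term meet join comp zero one v s)
                      (eval_term meet join comp zero one v u)
  | tZero => zero
  | tOne => one
  end.

Fixpoint holds {A : Type} (meet join comp : A -> A -> A) (zero one : A)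
    (v : nat -> A) (f : qf_formula) : Prop :=
  match f with
  | fEq s t => eval_term meet join comp zero one v s
               = eval_term meet join comp zero one v t
  | fLe s t => nat_le meet (eval_term meet join comp zero one v s)
                           (eval_term meet join comp zero one v t)
  | fTrue => True
  | fFalse => False
  | fNot g => ~ holds meet join comp zero one v g
  | fAnd g h => holds meet join comp zero one v g /\ holds meet join comp zero one v h
  | fOr g h => holds meet join comp zero one v g \/ holds meet join comp zero one v h
  | fImp g h => holds meet join comp zero one v g -> holds meet join comp zero one v h
  end.

Definition sat_bdbo (A : bdbo) (f : qf_formula) : Prop :=
  exists v : nat -> A,
    holds (bdbo_meet A) (bdbo_join A) (bdbo_comp A) (bdbo_zero A) (bdbo_one A) v f.

(** A sigma^bdbo formula read as a sigma^brdg formula: the symbols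
    /\, \/, o, 0, 1, <= are interpreted by the brdg's own operations. *)
Definition sat_brdg (B : brdg) (f : qf_formula) : Prop :=
  exists v : nat -> B,
    holds (brdg_meet B) (brdg_join B) (brdg_comp B) (brdg_zero B) (brdg_one B) v f.

(* Main.v *)
Require Import Defs.
From Stdlib Require Import FunctionalExtensionality PropExtensionality ProofIrrelevance.

Lemma L_idem {A} m j z o (H : bdl_axioms A m j z o) x : m x x = x.
Proof.
  pose proof (meet_absorb _ _ _ _ _ H x (m x x)) as E.
  rewrite (join_absorb _ _ _ _ _ H) in E. exact E.
Qed.

Lemma L_refl {A} m j z o (H : bdl_axioms A m j z o) x : nat_le m x x.
Proof. apply (L_idem _ _ _ _ H). Qed.

Lemma L_antisym {A} m j z o (H : bdl_axioms A m j z o) x y :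
  nat_le m x y -> nat_le m y x -> x = y.
Proof. unfold nat_le; intros h1 h2. transitivity (m x y); [symmetry; exact h1|].
  rewrite (meetC _ _ _ _ _ H). exact h2. Qed.

Lemma L_trans {A} m j z o (H : bdl_axioms A m j z o) x y w :
  nat_le m x y -> nat_le m y w -> nat_le m x w.
Proof.
  unfold nat_le; intros h1 h2. rewrite <- h1, <- (meetA _ _ _ _ _ H), h2. reflexivity.
Qed.

Lemma L_joinl {A} m j z o (H : bdl_axioms A m j z o) x y : nat_le m x (j x y).
Proof. apply (meet_absorb _ _ _ _ _ H). Qed.

Lemma L_joinr {A} m j z o (H : bdl_axioms A m j z o) x y : nat_le m y (j x y).
Proof. rewrite (joinC _ _ _ _ _ H). apply (meet_absorb _ _ _ _ _ H). Qed.

Lemma L_joinlub {A} m j z o (H : bdl_axioms A m j z o) x y w :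
  nat_le m x w -> nat_le m y w -> nat_le m (j x y) w.
Proof.
  unfold nat_le; intros h1 h2.
  rewrite (meetC _ _ _ _ _ H), (meet_distr _ _ _ _ _ H),
    (meetC _ _ _ _ _ H w x), (meetC _ _ _ _ _ H w y), h1, h2. reflexivity.
Qed.

Lemma L_meetl {A} m j z o (H : bdl_axioms A m j z o) x y : nat_le m (m x y) x.
Proof.
  unfold nat_le. rewrite (meetC _ _ _ _ _ H), (meetA _ _ _ _ _ H), (L_idem _ _ _ _ H). reflexivity.
Qed.

Lemma L_meetr {A} m j z o (H : bdl_axioms A m j z o) x y : nat_le m (m x y) y.
Proof. rewrite (meetC _ _ _ _ _ H). apply (L_meetl _ _ _ _ H). Qed.

Lemma L_meetglb {A} m j z o (H : bdl_axioms A m j z o) x y w :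
  nat_le m w x -> nat_le m w y -> nat_le m w (m x y).
Proof.
  unfold nat_le; intros h1 h2. rewrite (meetA _ _ _ _ _ H), h1. exact h2.
Qed.

Lemma L_zero {A} m j z o (H : bdl_axioms A m j z o) x : nat_le m z x.
Proof.
  unfold nat_le. rewrite <- (join0x _ _ _ _ _ H x) at 1. apply (meet_absorb _ _ _ _ _ H).
Qed.

Lemma L_one {A} m j z o (H : bdl_axioms A m j z o) x : nat_le m x o.
Proof. unfold nat_le. rewrite (meetC _ _ _ _ _ H). apply (meet1x _ _ _ _ _ H). Qed.

Lemma L_joinmono {A} m j z o (H : bdl_axioms A m j z o) a b c d :
  nat_le m a c -> nat_le m b d -> nat_le m (j a b) (j c d).
Proof.
  intros; apply (L_joinlub _ _ _ _ H).
  - eapply (L_trans _ _ _ _ H); [eassumption|apply (L_joinl _ _ _ _ H)].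
  - eapply (L_trans _ _ _ _ H); [eassumption|apply (L_joinr _ _ _ _ H)].
Qed.


Lemma brdg_res3 (B : brdg) x y w :
  nat_le (brdg_meet B) (brdg_comp B x y) w <-> nat_le (brdg_meet B) x (brdg_rdiv B w y).
Proof. rewrite brdg_res1. apply brdg_res2. Qed.

Lemma brdg_yoneda (B : brdg) a b :
  (forall w, nat_le (brdg_meet B) a w <-> nat_le (brdg_meet B) b w) -> a = b.
Proof.
  intros h. pose proof (brdg_lat B) as H.
  apply (L_antisym _ _ _ _ H); [apply h|apply h]; apply (L_refl _ _ _ _ H).
Qed.

Lemma L_join_le {A} m j z o (H : bdl_axioms A m j z o) x y w :
  nat_le m (j x y) w <-> nat_le m x w /\ nat_le m y w.
Proof.
  split.
  - intro h; split; (eapply (L_trans _ _ _ _ H); [|exact h]);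
      [apply (L_joinl _ _ _ _ H)|apply (L_joinr _ _ _ _ H)].
  - intros [h1 h2]; apply (L_joinlub _ _ _ _ H); assumption.
Qed.

Definition bdbo_of_brdg (B : brdg) : bdbo.
Proof.
  pose proof (brdg_lat B) as H.
  refine {| bdbo_car := brdg_car B; bdbo_meet := brdg_meet B; bdbo_join := brdg_join B;
            bdbo_comp := brdg_comp B; bdbo_zero := brdg_zero B; bdbo_one := brdg_one B;
            bdbo_lat := H |}.
  - intros x. apply (L_antisym _ _ _ _ H); [|apply (L_zero _ _ _ _ H)].
    apply brdg_res1, (L_zero _ _ _ _ H).
  - intros x. apply (L_antisym _ _ _ _ H); [|apply (L_zero _ _ _ _ H)].
    apply brdg_res3, (L_zero _ _ _ _ H).
  - intros x y z. apply brdg_yoneda; intro w.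
    rewrite brdg_res1, !(L_join_le _ _ _ _ H), !brdg_res1. tauto.
  - intros x y z. apply brdg_yoneda; intro w.
    rewrite brdg_res3, !(L_join_le _ _ _ _ H), !brdg_res3. tauto.
Defined.

Notation mt A := (bdbo_meet A).
Notation jn A := (bdbo_join A).
Notation cp A := (bdbo_comp A).
Notation le A := (nat_le (bdbo_meet A)).

Lemma comp_monor (A : bdbo) x y y' : le A y y' -> le A (cp A x y) (cp A x y').
Proof.
  intro h. pose proof (bdbo_lat A) as H.
  assert (E : jn A y y' = y').
  { rewrite <- h. rewrite (joinC _ _ _ _ _ H), (meetC _ _ _ _ _ H). apply (join_absorb _ _ _ _ _ H). }
  rewrite <- E, bdbo_compDr. apply (L_joinl _ _ _ _ H).
Qed.

Lemma comp_monol (A : bdbo) x x' y : le A x x' -> le A (cp A x y) (cp A x' y).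
Proof.
  intro h. pose proof (bdbo_lat A) as H.
  assert (E : jn A x x' = x').
  { rewrite <- h. rewrite (joinC _ _ _ _ _ H), (meetC _ _ _ _ _ H). apply (join_absorb _ _ _ _ _ H). }
  rewrite <- E, bdbo_compDl. apply (L_joinl _ _ _ _ H).
Qed.

Lemma comp_mono (A : bdbo) a b c d : le A a c -> le A b d -> le A (cp A a b) (cp A c d).
Proof.
  intros; eapply (L_trans _ _ _ _ (bdbo_lat A)); [apply comp_monol; eassumption|apply comp_monor; assumption].
Qed.

Record Ideal (A : bdbo) : Type := {
  ip : A -> Prop;
  ip0 : ip (bdbo_zero A);
  ipdown : forall x y, le A x y -> ip y -> ip x;
  ipjoin : forall x y, ip x -> ip y -> ip (jn A x y)
}.
Arguments ip {A}.

Lemma ideal_ext (A : bdbo) (I J : Ideal A) : (forall x, ip I x <-> ip J x) -> I = J.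
Proof.
  destruct I as [p a b c], J as [q a' b' c']; simpl; intro h.
  assert (p = q) by (extensionality x; apply propositional_extensionality; apply h).
  subst q. f_equal; apply proof_irrelevance.
Qed.


Definition iMeet (A : bdbo) (I J : Ideal A) : Ideal A.
Proof.
  pose proof (bdbo_lat A) as H.
  refine {| ip := fun x => ip I x /\ ip J x |}.
  - split; apply ip0.
  - intros x y h [h1 h2]; split; eapply ipdown; eassumption.
  - intros x y [h1 h2] [h3 h4]; split; apply ipjoin; assumption.
Defined.

Definition iJoin (A : bdbo) (I J : Ideal A) : Ideal A.
Proof.
  pose proof (bdbo_lat A) as H.
  refine {| ip := fun x => exists i j, ip I i /\ ip J j /\ le A x (jn A i j) |}.
  - exists (bdbo_zero A), (bdbo_zero A). repeat split; try apply ip0. apply (L_zero _ _ _ _ H).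
  - intros x y h (i & j & h1 & h2 & h3). exists i, j. repeat split; auto.
    eapply (L_trans _ _ _ _ H); eassumption.
  - intros x y (i & j & h1 & h2 & h3) (i' & j' & h1' & h2' & h3').
    exists (jn A i i'), (jn A j j'). repeat split; try (apply ipjoin; assumption).
    apply (L_joinlub _ _ _ _ H).
    + eapply (L_trans _ _ _ _ H); [exact h3|]. apply (L_joinmono _ _ _ _ H); apply (L_joinl _ _ _ _ H).
    + eapply (L_trans _ _ _ _ H); [exact h3'|]. apply (L_joinmono _ _ _ _ H); apply (L_joinr _ _ _ _ H).
Defined.

Definition iComp (A : bdbo) (I J : Ideal A) : Ideal A.
Proof.
  pose proof (bdbo_lat A) as H.
  refine {| ip := fun x => exists i j, ip I i /\ ip J j /\ le A x (cp A i j) |}.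
  - exists (bdbo_zero A), (bdbo_zero A). repeat split; try apply ip0. apply (L_zero _ _ _ _ H).
  - intros x y h (i & j & h1 & h2 & h3). exists i, j. repeat split; auto.
    eapply (L_trans _ _ _ _ H); eassumption.
  - intros x y (i & j & h1 & h2 & h3) (i' & j' & h1' & h2' & h3').
    exists (jn A i i'), (jn A j j'). repeat split; try (apply ipjoin; assumption).
    apply (L_joinlub _ _ _ _ H).
    + eapply (L_trans _ _ _ _ H); [exact h3|]. apply comp_mono; apply (L_joinl _ _ _ _ H).
    + eapply (L_trans _ _ _ _ H); [exact h3'|]. apply comp_mono; apply (L_joinr _ _ _ _ H).
Defined.

Definition iLdiv (A : bdbo) (I K : Ideal A) : Ideal A.
Proof.
  refine {| ip := fun y => forall i, ip I i -> ip K (cp A i y) |}.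
  - intros i _. rewrite bdbo_comp0r. apply ip0.
  - intros x y h h' i hi. eapply ipdown; [apply comp_monor; exact h|auto].
  - intros x y h h' i hi. rewrite bdbo_compDr. apply ipjoin; auto.
Defined.

Definition iRdiv (A : bdbo) (K J : Ideal A) : Ideal A.
Proof.
  refine {| ip := fun x => forall j, ip J j -> ip K (cp A x j) |}.
  - intros j _. rewrite bdbo_comp0l. apply ip0.
  - intros x y h h' j hj. eapply ipdown; [apply comp_monol; exact h|auto].
  - intros x y h h' j hj. rewrite bdbo_compDl. apply ipjoin; auto.
Defined.

Definition iDown (A : bdbo) (a : A) : Ideal A.
Proof.
  pose proof (bdbo_lat A) as H.
  refine {| ip := fun x => le A x a |}.
  - apply (L_zero _ _ _ _ H).
  - intros x y h1 h2. eapply (L_trans _ _ _ _ H); eassumption.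
  - intros x y h1 h2. apply (L_joinlub _ _ _ _ H); assumption.
Defined.

Definition iFull (A : bdbo) : Ideal A.
Proof.
  refine {| ip := fun _ => True |}; auto.
Defined.

Lemma ile (A : bdbo) (I J : Ideal A) : nat_le (iMeet A) I J <-> (forall x, ip I x -> ip J x).
Proof.
  unfold nat_le. split.
  - intros h x hx. rewrite <- h in hx. apply hx.
  - intro h. apply ideal_ext. simpl. intuition.
Qed.

Lemma ideal_lat (A : bdbo) :
  bdl_axioms (Ideal A) (iMeet A) (iJoin A) (iDown A (bdbo_zero A)) (iFull A).
Proof.
  pose proof (bdbo_lat A) as H.
  constructor; intros; apply ideal_ext; intro w; simpl.
  - tauto.
  - split.
    + intros (i & m & hi & (j & k & hj & hk & hm) & hx).
      exists (jn A i j), k. split; [exists i, j; repeat split; auto; apply (L_refl _ _ _ _ H)|].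
      split; [auto|].
      eapply (L_trans _ _ _ _ H); [exact hx|].
      rewrite <- (joinA _ _ _ _ _ H). apply (L_joinmono _ _ _ _ H); [apply (L_refl _ _ _ _ H)|exact hm].
    + intros (m & k & (i & j & hi & hj & hm) & hk & hx).
      exists i, (jn A j k). split; [auto|]. split; [exists j, k; repeat split; auto; apply (L_refl _ _ _ _ H)|].
      eapply (L_trans _ _ _ _ H); [exact hx|].
      rewrite (joinA _ _ _ _ _ H). apply (L_joinmono _ _ _ _ H); [exact hm|apply (L_refl _ _ _ _ H)].
  - tauto.
  - split; intros (i & j & h1 & h2 & h3); exists j, i; repeat split; auto;
      rewrite (joinC _ _ _ _ _ H); auto.
  - split; [tauto|]. intro hx; split; auto. exists w, (bdbo_zero A). repeat split; auto.
    apply ip0. apply (L_joinl _ _ _ _ H).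
  - split.
    + intros (i & j & h1 & [h2 h3] & h4). eapply ipdown; [exact h4|]. apply ipjoin; auto.
    + intro hx. exists w, (bdbo_zero A). repeat split; auto; try apply ip0. apply (L_joinl _ _ _ _ H).
  - split.
    + intros [hx (j & k & hj & hk & h)].
      exists (mt A w j), (mt A w k). repeat split.
      * eapply ipdown; [apply (L_meetl _ _ _ _ H)|auto].
      * eapply ipdown; [apply (L_meetr _ _ _ _ H)|auto].
      * eapply ipdown; [apply (L_meetl _ _ _ _ H)|auto].
      * eapply ipdown; [apply (L_meetr _ _ _ _ H)|auto].
      * rewrite <- (meet_distr _ _ _ _ _ H). apply (L_meetglb _ _ _ _ H); [apply (L_refl _ _ _ _ H)|exact h].
    + intros (i & j & [h1 h2] & [h3 h4] & h). split.
      * eapply ipdown; [exact h|]. apply ipjoin; auto.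
      * exists i, j. auto.
  - split.
    + intros (i & j & h1 & h2 & h3). eapply ipdown; [exact h3|].
      apply ipjoin; [eapply ipdown; [exact h1|apply ip0]|exact h2].
    + intro hx. exists (bdbo_zero A), w. repeat split; auto. apply (L_refl _ _ _ _ H).
      apply (L_joinr _ _ _ _ H).
  - tauto.
Qed.

Definition brdg_of_bdbo (A : bdbo) : brdg.
Proof.
  refine {| brdg_car := Ideal A; brdg_meet := iMeet A; brdg_join := iJoin A;
            brdg_comp := iComp A; brdg_ldiv := iLdiv A; brdg_rdiv := iRdiv A;
            brdg_zero := iDown A (bdbo_zero A); brdg_one := iFull A;
            brdg_lat := ideal_lat A |}.
  - intros I J K. rewrite !ile. simpl. split.
    + intros h y hy i hi. apply h. exists i, y. repeat split; auto. apply (L_refl _ _ _ _ (bdbo_lat A)).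
    + intros h x (i & j & hi & hj & hx). eapply ipdown; [exact hx|]. auto.
  - intros I J K. rewrite !ile. simpl. split; intros h a ha b hb; apply h; auto.
Defined.

Lemma iDown_le (A : bdbo) a b : le A a b <-> (forall x, ip (iDown A a) x -> ip (iDown A b) x).
Proof.
  pose proof (bdbo_lat A) as H. simpl. split.
  - intros h x hx. eapply (L_trans _ _ _ _ H); eassumption.
  - intro h. apply h. apply (L_refl _ _ _ _ H).
Qed.

Lemma iDown_inj (A : bdbo) a b : iDown A a = iDown A b -> a = b.
Proof.
  intro e. apply (L_antisym _ _ _ _ (bdbo_lat A)); apply iDown_le; rewrite e; auto.
Qed.

Lemma eval_iDown (A : bdbo) (v : nat -> A) t :
  eval_term (iMeet A) (iJoin A) (iComp A) (iDown A (bdbo_zero A)) (iFull A)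
    (fun n => iDown A (v n)) t
  = iDown A (eval_term (bdbo_meet A) (bdbo_join A) (bdbo_comp A) (bdbo_zero A) (bdbo_one A) v t).
Proof.
  pose proof (bdbo_lat A) as H.
  induction t; simpl; try rewrite IHt1, IHt2; try reflexivity;
    apply ideal_ext; intro x; simpl.
  - split.
    + intros [h1 h2]. apply (L_meetglb _ _ _ _ H); auto.
    + intro h; split; (eapply (L_trans _ _ _ _ H); [exact h|]);
        [apply (L_meetl _ _ _ _ H)|apply (L_meetr _ _ _ _ H)].
  - split.
    + intros (i & j & h1 & h2 & h3). eapply (L_trans _ _ _ _ H); [exact h3|].
      apply (L_joinmono _ _ _ _ H); auto.
    + intro h. do 2 eexists. split; [|split; [|exact h]]; apply (L_refl _ _ _ _ H).
  - split.
    + intros (i & j & h1 & h2 & h3). eapply (L_trans _ _ _ _ H); [exact h3|].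
      apply comp_mono; auto.
    + intro h. do 2 eexists. split; [|split; [|exact h]]; apply (L_refl _ _ _ _ H).
  - split; auto. intros _. apply (L_one _ _ _ _ H).
Qed.

Lemma holds_iDown (A : bdbo) (v : nat -> A) f :
  holds (iMeet A) (iJoin A) (iComp A) (iDown A (bdbo_zero A)) (iFull A)
    (fun n => iDown A (v n)) f
  <-> holds (bdbo_meet A) (bdbo_join A) (bdbo_comp A) (bdbo_zero A) (bdbo_one A) v f.
Proof.
  induction f; simpl; try rewrite !eval_iDown; try tauto.
  - split; [apply iDown_inj|intros ->; reflexivity].
  - rewrite ile, iDown_le. tauto.
Qed.

Theorem lemma5p2 (phi : qf_formula) :
  (exists A : bdbo, sat_bdbo A phi) <-> (exists B : brdg, sat_brdg B phi).
Proof.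
  split.
  - intros [A [v hv]]. exists (brdg_of_bdbo A). exists (fun n => iDown A (v n)).
    apply (holds_iDown A v phi). exact hv.
  - intros [B [v hv]]. exists (bdbo_of_brdg B). exists v. exact hv.
Qed.
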